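(* Let $\mathfrak{v}=\mathfrak{v}_{\bar 0}\oplus\mathfrak{v}_{\bar 1}$ be a finite-dimensional complex superspace, $\chi\in\mathfrak{v}_{\bar 0}^*$, and $\hat A$ the completion of $S[\mathfrak{v}]$ at $M_\chi$, with an even continuous Poisson bracket $\{\cdot,\cdot\}$. (i) If there are odd $f,g\in\hat AM_\chi$ with $\{f,g\}=1+t$ for some $t\in M_\chi$, then there exists an odd $h\in\hat A$ with $\{h,h\}=1$. (ii) For an odd $h\in\hat A$ with $\{h,h\}=1$, let $\hat B_1=\ker(\mathrm{ad}_h)$. Then $\phi:\bigwedge(\mathbb{C}h)\otimes\hat B_1\to\hat A$, $a\otimes b\mapsto ab$, is an isomorphism of Poisson algebras.
   Context: $M_\chi$ is the ideal generated by $x-\chi(x)$, $x\in\mathfrak{v}$ ($\chi$ extended by zero on $\mathfrak{v}_{\bar 1}$), $\hat A=\varprojlim S[\mathfrak{v}]/M_\chi^k$; $\mathrm{ad}_h=\{h,\cdot\}$. $\bigwedge(\mathbb{C}h)=\mathbb{C}\oplus\mathbb{C}h$ carries the Poisson bracket with $\{h,h\}=1$. *)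

(* Defs.v *)
From mathcomp Require Import all_boot all_algebra.
From mathcomp Require Import reals.
From mathcomp Require Export complex.
Set Implicit Arguments. Unset Strict Implicit. Unset Printing Implicit Defensive.
Import GRing.Theory.
Local Open Scope ring_scope.

(* Model of the completed supersymmetric algebra  Â = lim S[v]/M_chi^k.      *)
(* v = v_0 (+) v_1 with dim v_0 = m, dim v_1 = n; fix a homogeneous basis     *)
(* x_0..x_{m-1} of v_0 and theta_0..theta_{n-1} of v_1.  Put                  *)
(* y_i = x_i - chi(x_i).  Then Â = C[[y_0..y_{m-1}]] (x) /\(theta_0..),       *)
(* whose elements are arbitrary coefficient families indexed by monomials    *)
(* y^alpha theta_S (alpha a multi-index, S a subset of the odd indices,      *)
(* theta_S the product of the theta_j, j in S, in increasing order).         *)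

Definition mon (m n : nat) := ({ffun 'I_m -> nat} * {set 'I_n})%type.
Definition ser (K : Type) (m n : nat) := mon m n -> K.

Section Ops.
Variables (K : comRingType) (m n : nat).
Local Notation S := (ser K m n).

Definition szero : S := fun _ => 0.
Definition sadd (f g : S) : S := fun x => f x + g x.
Definition sopp (f : S) : S := fun x => - f x.
Definition sscale (c : K) (f : S) : S := fun x => c * f x.
Definition mon0 : mon m n := ([ffun => 0%N], set0).
Definition sone : S := fun x => if x == mon0 then 1 else 0.
Definition sconst (c : K) : S := sscale c sone.

(* sign of theta_T theta_U = wsign T U * theta_(T :|: U)  (T, U disjoint) *)
Definition wsign (T U : {set 'I_n}) : K :=
  (-1) ^+ #|[set p : 'I_n * 'I_n | [&& p.1 \in T, p.2 \in U & (p.2 < p.1)%N]]|.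

(* Cauchy product of supercommutative formal power series *)
Definition smul (f g : S) : S := fun x =>
  let a := x.1 in let U := x.2 in
  \sum_(b : {ffun 'I_m -> 'I_(\max_i a i).+1} | [forall i, (b i <= a i)%N])
   \sum_(T : {set 'I_n} | T \subset U)
     wsign T (U :\: T) * f ([ffun i => nat_of_ord (b i)], T)
       * g ([ffun i => (a i - b i)%N], U :\: T).

Definition yvar (i : 'I_m) : S :=
  fun x => if x == ([ffun j => nat_of_bool (j == i)], set0) then 1 else 0.
Definition thvar (j : 'I_n) : S :=
  fun x => if x == ([ffun => 0%N], [set j]) then 1 else 0.

Definition xel (chi : 'I_m -> K) (i : 'I_m) : S := sadd (sconst (chi i)) (yvar i).

(* f lies in the ideal Â M_chi generated by the x - chi(x), x in v
   (chi extended by zero on v_1, so the odd generators are the theta_j). *)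
Definition in_AM (chi : 'I_m -> K) (f : S) : Prop :=
  exists (a : 'I_m -> S) (b : 'I_n -> S),
    f = fun x => \sum_i smul (a i) (sadd (xel chi i) (sconst (- chi i))) x
               + \sum_j smul (b j) (thvar j) x.

Definition homog (p : bool) (f : S) : Prop :=
  forall x : mon m n, f x != 0 -> odd #|x.2| = p.
Definition is_odd (f : S) := homog true f.

Definition spar (f : S) : S := fun x => if odd #|x.2| then - f x else f x.

Definition ssign (b : bool) : K := (-1) ^+ b.

(* f in (Â M_chi)^k = closure of M_chi^k : all coefficients of total degree < k vanish *)
Definition ord_ge (k : nat) (f : S) : Prop :=
  forall x : mon m n, (\sum_i x.1 i + #|x.2| < k)%N -> f x = 0.

Record is_poisson (br : S -> S -> S) : Prop := {
  br_addl : forall f g k, br (sadd f g) k = sadd (br f k) (br g k);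
  br_addr : forall f g k, br f (sadd g k) = sadd (br f g) (br f k);
  br_scalel : forall c f g, br (sscale c f) g = sscale c (br f g);
  br_scaler : forall c f g, br f (sscale c g) = sscale c (br f g);
  br_even : forall p q f g, homog p f -> homog q g -> homog (p (+) q) (br f g);
  br_skew : forall p q f g, homog p f -> homog q g ->
      br f g = sscale (- ssign (p && q)) (br g f);
  br_jacobi : forall p q f g k, homog p f -> homog q g ->
      br f (br g k) = sadd (br (br f g) k) (sscale (ssign (p && q)) (br g (br f k)));
  br_leibniz : forall p q f g k, homog p f -> homog q g ->
      br f (smul g k) = sadd (smul (br f g) k) (sscale (ssign (p && q)) (smul g (br f k)))
}.

Definition br_continuous (br : S -> S -> S) : Prop :=
  forall f g (k : nat), exists l : nat, forall u v, ord_ge l u -> ord_ge l v ->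
    ord_ge k (sadd (br (sadd f u) (sadd g v)) (sopp (br f g))).

(* The Poisson superalgebra  /\(C h) (x) B1  (h odd, {h,h} = 1).            *)
(* Every element is uniquely  1(x)b0 + h(x)b1 ; we represent it by (b0,b1).  *)
(* With the usual super tensor product rules                                 *)
(*   (a(x)b)(a'(x)b') = (-1)^{|b||a'|} aa'(x)bb',                            *)
(*   {a(x)b,a'(x)b'} = (-1)^{|b||a'|}({a,a'}(x)bb' + aa'(x){b,b'})           *)
(* and h^2 = 0, {h,h} = 1, {1,-} = 0, these unfold to the formulas below     *)
(* (spar implements the sign (-1)^{|b|}).                                    *)
Definition tmul (P Q : S * S) : S * S :=
  (smul P.1 Q.1, sadd (smul (spar P.1) Q.2) (smul P.2 Q.1)).
Definition tbr (br : S -> S -> S) (P Q : S * S) : S * S :=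
  (sadd (br P.1 Q.1) (smul (spar P.2) Q.2), sadd (br (spar P.1) Q.2) (br P.2 Q.1)).
Definition phi (h : S) (P : S * S) : S := sadd P.1 (smul h P.2).

Definition inB1 (br : S -> S -> S) (h : S) (b : S) : Prop := br h b = szero.

Definition phi_poisson_iso (br : S -> S -> S) (h : S) : Prop :=
  let B1 := inB1 br h in
  [/\
      (forall P Q, B1 P.1 -> B1 P.2 -> B1 Q.1 -> B1 Q.2 -> phi h P = phi h Q -> P = Q),
      (forall f, exists P, [/\ B1 P.1, B1 P.2 & phi h P = f]),
      (forall c P Q, B1 P.1 -> B1 P.2 -> B1 Q.1 -> B1 Q.2 ->
         phi h (sadd (sscale c P.1) Q.1, sadd (sscale c P.2) Q.2)
         = sadd (sscale c (phi h P)) (phi h Q)),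
      phi h (sone, szero) = sone /\
      (forall P Q, B1 P.1 -> B1 P.2 -> B1 Q.1 -> B1 Q.2 ->
         phi h (tmul P Q) = smul (phi h P) (phi h Q)) &
      (forall P Q, B1 P.1 -> B1 P.2 -> B1 Q.1 -> B1 Q.2 ->
         phi h (tbr br P Q) = br (phi h P) (phi h Q))].

End Ops.

(* Main.v *)
Require Import Defs.
From mathcomp Require Import all_boot all_algebra.
From mathcomp Require Import reals complex.
From mathcomp Require Import ring zify.
From Stdlib Require Import FunctionalExtensionality.
Set Implicit Arguments. Unset Strict Implicit. Unset Printing Implicit Defensive.
Import GRing.Theory.
Local Open Scope ring_scope.

Section Box.
Variable (K : comNzRingType) (m : nat).
Local Notation ffn := {ffun 'I_m -> nat}.
Implicit Types (a u v : ffn).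
Definition nu N (b : {ffun 'I_m -> 'I_N.+1}) : ffn := [ffun i => (b i : nat)].
Definition fle (u v : ffn) := [forall i, (u i <= v i)%N].
Definition fsub (u v : ffn) : ffn := [ffun i => (u i - v i)%N].
Definition ford N (u : ffn) : {ffun 'I_m -> 'I_N.+1} := [ffun i => inord (u i)].

Lemma nuE N b i : @nu N b i = b i.
Proof. by rewrite ffunE. Qed.

Lemma val_inord N k : nat_of_ord (inord k : 'I_N.+1) = if (k <= N)%N then k else 0%N.
Proof. rewrite /inord val_insubd /= ltnS; by case: ifP. Qed.

Lemma nu_ford N (u : ffn) : (forall i, u i <= N)%N -> nu (ford N u) = u.
Proof. by move=> h; apply/ffunP => i; rewrite !ffunE inordK // ltnS. Qed.

Lemma ford_nu N b : ford N (@nu N b) = b.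
Proof. by apply/ffunP => i; apply/val_inj; rewrite !ffunE inord_val. Qed.

Lemma nu_inj N : injective (@nu N).
Proof. by move=> b c e; rewrite -(ford_nu b) -(ford_nu c) e. Qed.

Lemma nu_le N b i : (@nu N b i <= N)%N.
Proof. by rewrite nuE -ltnS. Qed.

Lemma fleP (u v : ffn) : reflect (forall i, u i <= v i)%N (fle u v).
Proof. exact: forallP. Qed.

Lemma box_widen N N' (P : pred ffn) (F : ffn -> K) : (N <= N')%N ->
  (forall v, P v -> forall i, v i <= N)%N ->
  \sum_(b : {ffun 'I_m -> 'I_N.+1} | P (nu b)) F (nu b) =
  \sum_(b : {ffun 'I_m -> 'I_N'.+1} | P (nu b)) F (nu b).
Proof.
move=> le HP.
have e b : nu (ford N' (@nu N b)) = nu b.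
  by apply: nu_ford => i; apply: leq_trans (nu_le _ _) le.
rewrite [RHS](reindex_onto (fun b : {ffun 'I_m -> 'I_N.+1} => ford N' (nu b))
   (fun b => ford N (nu b))).
  by apply: eq_big => b; rewrite e ?ford_nu ?eqxx ?andbT.
by move=> b Pb; rewrite nu_ford ?ford_nu //; apply: HP.
Qed.

Lemma box_single N a (v : ffn) (F : ffn -> K) : (forall i, a i <= N)%N ->
  fle v a -> (forall u, fle u a -> u != v -> F u = 0) ->
  \sum_(b : {ffun 'I_m -> 'I_N.+1} | fle (nu b) a) F (nu b) = F v.
Proof.
move=> hN hv h0.
have hvN : forall i, (v i <= N)%N by move=> i; apply: leq_trans (hN i); exact: (fleP _ _ hv).
rewrite (bigD1 (ford N v)) ?nu_ford //= big1 ?addr0 // => b /andP [hb ne].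
apply: h0 => //; apply: contra ne => /eqP <-; by rewrite ford_nu.
Qed.

Lemma box_zero N a (F : ffn -> K) :
  (forall u, fle u a -> F u = 0) ->
  \sum_(b : {ffun 'I_m -> 'I_N.+1} | fle (nu b) a) F (nu b) = 0.
Proof. by move=> h; rewrite big1 // => b hb; apply: h. Qed.

Lemma box_rev N a (G : ffn -> ffn -> K) : (forall i, a i <= N)%N ->
  \sum_(b : {ffun 'I_m -> 'I_N.+1} | fle (nu b) a) G (nu b) (fsub a (nu b)) =
  \sum_(b : {ffun 'I_m -> 'I_N.+1} | fle (nu b) a) G (fsub a (nu b)) (nu b).
Proof.
move=> hN.
pose h (b : {ffun 'I_m -> 'I_N.+1}) := ford N (fsub a (nu b)).
have nh b : nu (h b) = fsub a (nu b).
  by apply: nu_ford => i; rewrite ffunE; apply: leq_trans (leq_subr _ _) (hN i).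
rewrite [LHS](reindex_onto h h).
  apply: eq_big => b.
    rewrite nh; apply/andP/idP.
      move=> [_ /eqP e]; rewrite -e nh; apply/fleP => i; rewrite !ffunE; exact: leq_subr.
    move=> hb; split; first by apply/fleP => i; rewrite !ffunE; exact: leq_subr.
    apply/eqP/nu_inj; rewrite nh nh; apply/ffunP => i; rewrite !ffunE subKn //.
    by move/fleP: hb => /(_ i); rewrite nuE.
  move/andP=> [_ /eqP e]; rewrite nh; congr G.
  by have := congr1 (@nu N) e; rewrite nh nh.
move=> b hb; apply: nu_inj; rewrite nh nh; apply/ffunP => i; rewrite !ffunE subKn //.
by move/fleP: hb => /(_ i); rewrite nuE.
Qed.


Definition fadd u v : ffn := [ffun i => (u i + v i)%N].

Lemma ffeqP u v : reflect (forall i, u i = v i) (u == v).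
Proof. by apply: (iffP eqP) => [-> //|h]; apply/ffunP. Qed.

Lemma box_assoc N a (G : ffn -> ffn -> ffn -> K) : (forall i, a i <= N)%N ->
  \sum_(b : {ffun 'I_m -> 'I_N.+1} | fle (nu b) a)
    \sum_(c : {ffun 'I_m -> 'I_N.+1} | fle (nu c) (nu b))
       G (nu c) (fsub (nu b) (nu c)) (fsub a (nu b)) =
  \sum_(c : {ffun 'I_m -> 'I_N.+1} | fle (nu c) a)
    \sum_(d : {ffun 'I_m -> 'I_N.+1} | fle (nu d) (fsub a (nu c)))
       G (nu c) (nu d) (fsub (fsub a (nu c)) (nu d)).
Proof.
move=> hN.
rewrite !pair_big_dep.
pose h (p : {ffun 'I_m -> 'I_N.+1} * {ffun 'I_m -> 'I_N.+1}) :=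
  (ford N (fadd (nu p.1) (nu p.2)), p.1).
pose h' (p : {ffun 'I_m -> 'I_N.+1} * {ffun 'I_m -> 'I_N.+1}) :=
  (p.2, ford N (fsub (nu p.1) (nu p.2))).
rewrite [LHS](reindex_onto h h').
  apply: eq_big => [[c d]|[c d]] /=.
    rewrite xpair_eqE eqxx /=.
    apply/idP/idP.
      move=> /andP [/andP [/fleP h1 /fleP h2] /eqP e].
      have e' := congr1 (@nu N) e.
      apply/andP; split; apply/fleP => i.
        by move: (h1 i) (h2 i); rewrite !ffunE; lia.
      move: (h1 i) (h2 i) (congr1 (fun f : ffn => f i) e'); rewrite !ffunE; do ! rewrite val_inord.
      by move: (nu_le d i); rewrite ffunE; repeat (case: ifP => ?); lia.
    move=> /andP [/fleP h1 /fleP h2].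
    have hs i : (fadd (nu c) (nu d) i <= N)%N.
      by move: (h1 i) (h2 i) (hN i); rewrite !ffunE; lia.
    have e1 : nu (ford N (fadd (nu c) (nu d))) = fadd (nu c) (nu d) by apply: nu_ford.
    have e2 : nu (ford N (fsub (fadd (nu c) (nu d)) (nu c))) = nu d.
      rewrite nu_ford; first by apply/ffunP => i; rewrite !ffunE addKn.
      by move=> i; rewrite !ffunE addKn -ltnS ltn_ord.
    rewrite e1 andbC; apply/andP; split.
      by apply/eqP/nu_inj; rewrite e2.
    apply/andP; split; apply/fleP => i; move: (h1 i) (h2 i); rewrite !ffunE; lia.
  move=> /andP [/andP [/fleP h1 /fleP h2] /eqP e].
  have e' := congr1 (fun p => @nu N p.2) e.
  rewrite /h /h' /= in e' h1 h2 *.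
  have hs i : (fadd (nu c) (nu d) i <= N)%N.
    move: (h1 i) (h2 i) (congr1 (fun f : ffn => f i) e') (hN i); rewrite !ffunE; do ! rewrite val_inord.
    case: (leqP (c i + d i) N) => h3; first by move=> *.
    rewrite sub0n !leq0n => _ h4 h5 _; move: h3; rewrite -h5; move: h4; rewrite leqn0 => /eqP ->. by [].
  have e1 : nu (ford N (fadd (nu c) (nu d))) = fadd (nu c) (nu d) by apply: nu_ford.
  rewrite e1; congr G; apply/ffunP => i; rewrite !ffunE; lia.
move=> [b c] /andP [/fleP h1 /fleP h2] /=; rewrite /= in h1 h2.
have e3 : nu (ford N (fsub (nu b) (nu c))) = fsub (nu b) (nu c).
  by apply: nu_ford => i; rewrite !ffunE -ltnS; apply: leq_ltn_trans (leq_subr _ _) (ltn_ord _).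
rewrite /h /h' /= e3; congr pair; apply: nu_inj; rewrite nu_ford.
  by apply/ffunP => i; move: (h2 i); rewrite !ffunE; lia.
move=> i; rewrite !ffunE; move: (h2 i); rewrite !ffunE => h4; rewrite subnKC //.
by rewrite -ltnS.
Qed.

End Box.

Section Sets.
Variable (K : comNzRingType) (n : nat).
Implicit Types (A B C T U V : {set 'I_n}).

Lemma set_assoc U (H : {set 'I_n} -> {set 'I_n} -> {set 'I_n} -> K) :
  \sum_(T : {set 'I_n} | T \subset U) \sum_(T' : {set 'I_n} | T' \subset T) H T' (T :\: T') (U :\: T) =
  \sum_(T' : {set 'I_n} | T' \subset U) \sum_(T'' : {set 'I_n} | T'' \subset U :\: T') H T' T'' (U :\: T' :\: T'').
Proof.
rewrite !pair_big_dep.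
pose h (p : {set 'I_n} * {set 'I_n}) := (p.1 :|: p.2, p.1).
pose h' (p : {set 'I_n} * {set 'I_n}) := (p.2, p.1 :\: p.2).
rewrite [LHS](reindex_onto h h').
  apply: eq_big => [[A B]|[A B]] /=.
    rewrite xpair_eqE eqxx subUset subsetUl andbT /= setDUl setDv set0U subsetD.
    apply/idP/idP.
      by move=> /andP [/andP [-> ->] /eqP/setDidPl ->].
    by move=> /andP [-> /andP [-> h1]]; apply/eqP/setDidPl.
  move=> /andP [_ /eqP e]; have e2 := congr1 snd e; rewrite /h /h' /= setDUl setDv set0U in e2.
  by rewrite setDUl setDv set0U setDDl e2.
move=> [T T'] /andP [hT hT'] /=.
by rewrite /h /h' /=; congr pair; apply/setP => x; rewrite !inE; case: (boolP (x \in T')) => // /(subsetP hT') ->.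
Qed.

Lemma set_rev U (H : {set 'I_n} -> {set 'I_n} -> K) :
  \sum_(T : {set 'I_n} | T \subset U) H T (U :\: T) = \sum_(T : {set 'I_n} | T \subset U) H (U :\: T) T.
Proof.
have e T : T \subset U -> U :\: (U :\: T) = T.
  move=> hT; apply/setP => x; rewrite !inE; case: (boolP (x \in T)) => [/(subsetP hT) -> //|_].
  by case: (x \in U).
rewrite [LHS](reindex_onto (fun T => U :\: T) (fun T => U :\: T)); last by move=> T; exact: e.
apply: eq_big => [T|T /andP [_ /eqP ->] //].
rewrite subsetDl /=; apply/idP/idP => [/eqP <-|hT]; first exact: subsetDl.
by rewrite e.
Qed.

Definition wpairs A B := [set p : 'I_n * 'I_n | [&& p.1 \in A, p.2 \in B & (p.2 < p.1)%N]].

Lemma wsignE A B : wsign K A B = (-1) ^+ #|wpairs A B|.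
Proof. by []. Qed.

Lemma wsign0l B : wsign K set0 B = 1.
Proof.
rewrite wsignE (_ : wpairs _ _ = set0) ?cards0 //.
by apply/setP => p; rewrite !inE.
Qed.

Lemma wsign0r A : wsign K A set0 = 1.
Proof.
rewrite wsignE (_ : wpairs _ _ = set0) ?cards0 //.
by apply/setP => p; rewrite !inE andbF.
Qed.

Lemma wsignUl A B C : [disjoint A & B] -> wsign K (A :|: B) C = wsign K A C * wsign K B C.
Proof.
move=> dAB; rewrite !wsignE -exprD.
have -> : wpairs (A :|: B) C = wpairs A C :|: wpairs B C.
  by apply/setP => p; rewrite !inE andb_orl.
rewrite cardsU (_ : _ :&: _ = set0) ?cards0 ?subn0 //.
apply/setP => p; rewrite !inE.
case: (boolP (p.1 \in A)) => //= hA; case: (boolP (p.1 \in B)) => //= hB; rewrite ?andbF //.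
by move: dAB; rewrite disjoints_subset => /subsetP /(_ _ hA); rewrite inE hB.
Qed.

Lemma wsignUr A B C : [disjoint B & C] -> wsign K A (B :|: C) = wsign K A B * wsign K A C.
Proof.
move=> dBC; rewrite !wsignE -exprD.
have -> : wpairs A (B :|: C) = wpairs A B :|: wpairs A C.
  by apply/setP => p; rewrite !inE; case: (p.1 \in A); rewrite //= andb_orl.
rewrite cardsU (_ : _ :&: _ = set0) ?cards0 ?subn0 //.
apply/setP => p; rewrite !inE.
case: (boolP (p.2 \in B)) => hB; case: (boolP (p.2 \in C)) => hC; rewrite ?andbF //=.
by move: dBC; rewrite disjoints_subset => /subsetP /(_ _ hB); rewrite inE hC.
Qed.

Definition pswap (p : 'I_n * 'I_n) := (p.2, p.1).
Lemma pswapK : involutive pswap. Proof. by case. Qed.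

Lemma wsignC A B : [disjoint A & B] -> wsign K A B * wsign K B A = (-1) ^+ (#|A| * #|B|).
Proof.
move=> dAB; rewrite !wsignE -exprD -cardsX.
have -> : #|wpairs B A| = #|(fun p : 'I_n * 'I_n => (p.2, p.1)) @: wpairs B A| by rewrite card_imset //; exact: inv_inj pswapK.
have dis : wpairs A B :&: (fun p : 'I_n * 'I_n => (p.2, p.1)) @: wpairs B A = set0.
  apply/setP => [[x y]]; rewrite !inE.
  apply/negP => /andP [/and3P [_ _ h1] /imsetP [[u v] hu]]; move=> [ex ey].
  by move: hu h1; rewrite !inE ex ey /= => /and3P [_ _ h2] h1; move: (ltn_trans h1 h2); rewrite ltnn.
rewrite -cardsUI dis cards0 addn0; congr (_ ^+ _); apply: eq_card.
move=> -[x y]; rewrite !inE /=.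
apply/idP/idP.
  case/orP => [/and3P [-> -> //]|/imsetP [[u v]]].
  by rewrite !inE /= => /and3P [hv hu _] [-> ->]; rewrite hu hv.
move=> /andP [hx hy]; case: (ltngtP x y) => hxy.
- apply/orP; right; apply/imsetP; exists (y, x) => //; by rewrite !inE hx hy hxy.
- by rewrite hx hy.
- move: hy; rewrite -(val_inj hxy) => hy2; move: dAB; rewrite disjoints_subset => /subsetP /(_ _ hx); by rewrite inE hy2.
Qed.


Lemma setUDK' A B : A \subset B -> A :|: (B :\: A) = B.
Proof.
move=> h; apply/setP => x; rewrite !inE.
by case: (boolP (x \in A)) => //= /(subsetP h) ->.
Qed.

Lemma wsign_assoc A B U : A \subset U -> B \subset U :\: A ->
  wsign K (A :|: B) (U :\: A :\: B) * wsign K A B =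
  wsign K A (U :\: A) * wsign K B (U :\: A :\: B).
Proof.
move=> hA hB.
have dAB : [disjoint A & B] by move: hB; rewrite subsetD disjoint_sym => /andP [].
have dB : [disjoint B & U :\: A :\: B].
  rewrite disjoints_subset; apply/subsetP => x hx; rewrite !inE hx; by [].
have e : U :\: A = B :|: (U :\: A :\: B) by rewrite setUDK'.
have -> : wsign K A (U :\: A) = wsign K A B * wsign K A (U :\: A :\: B).
  by rewrite {1}e wsignUr.
rewrite wsignUl //.
ring.
Qed.


Lemma wsign_sqr A B : wsign K A B * wsign K A B = 1.
Proof. by rewrite wsignE -exprMn mulrNN mulr1 expr1n. Qed.

End Sets.

Section Ring.
Variable (K : comNzRingType) (m n : nat).
Local Notation S := (ser K m n).
Local Notation ffn := {ffun 'I_m -> nat}.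
Local Notation sg := (@wsign K n).
Implicit Types (f g k : S) (a : ffn) (U T : {set 'I_n}).

Lemma fle_max a (v : ffn) : fle v a -> forall i, (v i <= \max_j a j)%N.
Proof. by move=> /fleP h i; apply: leq_trans (h i) (leq_bigmax _). Qed.

Lemma smulN f g a U N : (forall i, a i <= N)%N ->
  smul f g (a, U) = \sum_(b : {ffun 'I_m -> 'I_N.+1} | fle (nu b) a)
    \sum_(T : {set 'I_n} | T \subset U) sg T (U :\: T) * f (nu b, T) * g (fsub a (nu b), U :\: T).
Proof.
move=> hN; rewrite /smul /=.
set M := (\max_i a i)%N.
pose F (v : ffn) := \sum_(T : {set 'I_n} | T \subset U) sg T (U :\: T) * f (v, T) * g (fsub a v, U :\: T).
transitivity (\sum_(b : {ffun 'I_m -> 'I_M.+1} | fle (nu b) a) F (nu b)).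
  apply: eq_big => [b|b _]; first by apply: eq_forallb => i; rewrite ffunE.
  apply: eq_bigr => T _; congr (_ * _ * g (_, _)); apply/ffunP => i; by rewrite !ffunE.
rewrite (@box_widen K m M (maxn M N) (fun v => fle v a) F) ?leq_maxl //; last exact: fle_max.
rewrite -(@box_widen K m N (maxn M N) (fun v => fle v a) F) ?leq_maxr //.
by move=> v /fleP h i; apply: leq_trans (h i) (hN i).
Qed.

Lemma smul_ext f f' g g' a U :
  (forall (v : ffn) T, fle v a -> T \subset U -> f (v, T) = f' (v, T) /\ g (v, T) = g' (v, T)) ->
  smul f g (a, U) = smul f' g' (a, U).
Proof.
move=> h; rewrite !(smulN _ _ _ (@leq_bigmax _ a)).
apply: eq_bigr => b hb; apply: eq_bigr => T hT.
have [-> _] := h _ _ hb hT.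
have h1 : fle (fsub a (nu b)) a by apply/fleP => i; rewrite ffunE leq_subr.
by have [_ ->] := h (fsub a (nu b)) (U :\: T) h1 (subsetDl _ _).
Qed.


Lemma smulDl f f' g x : smul (sadd f f') g x = smul f g x + smul f' g x.
Proof.
case: x => a U; rewrite /smul /sadd /= -big_split; apply: eq_bigr => b _.
by rewrite -big_split; apply: eq_bigr => T _ /=; rewrite mulrDr mulrDl.
Qed.

Lemma smulDr f g g' x : smul f (sadd g g') x = smul f g x + smul f g' x.
Proof.
case: x => a U; rewrite /smul /sadd /= -big_split; apply: eq_bigr => b _.
by rewrite -big_split; apply: eq_bigr => T _ /=; rewrite mulrDr.
Qed.

Lemma smulZl c f g x : smul (sscale c f) g x = c * smul f g x.
Proof.
case: x => a U; rewrite /smul /sscale /= mulr_sumr; apply: eq_bigr => b _.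
by rewrite mulr_sumr; apply: eq_bigr => T _ /=; ring.
Qed.

Lemma smulZr c f g x : smul f (sscale c g) x = c * smul f g x.
Proof.
case: x => a U; rewrite /smul /sscale /= mulr_sumr; apply: eq_bigr => b _.
by rewrite mulr_sumr; apply: eq_bigr => T _ /=; ring.
Qed.

Lemma smul0l g x : smul (@szero K m n) g x = 0.
Proof.
case: x => a U; rewrite /smul /szero /= big1 // => b _.
by rewrite big1 // => T _; rewrite mulr0 mul0r.
Qed.

Lemma smul0r f x : smul f (@szero K m n) x = 0.
Proof.
case: x => a U; rewrite /smul /szero /= big1 // => b _.
by rewrite big1 // => T _; rewrite mulr0.
Qed.

Lemma smul_rev f g a U :
  smul f g (a, U) = \sum_(b : {ffun 'I_m -> 'I_(\max_i a i).+1} | fle (nu b) a)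
    \sum_(T : {set 'I_n} | T \subset U) sg (U :\: T) T * f (fsub a (nu b), U :\: T) * g (nu b, T).
Proof.
rewrite (smulN _ _ _ (@leq_bigmax _ a)).
rewrite (@box_rev K m _ a (fun u v => \sum_(T : {set 'I_n} | T \subset U)
   sg T (U :\: T) * f (u, T) * g (v, U :\: T)) (@leq_bigmax _ a)).
apply: eq_bigr => b _.
exact: (@set_rev K n U (fun A B => sg A B * f (fsub a (nu b), A) * g (nu b, B))).
Qed.

Definition sdelta (y : mon m n) : S := fun x => if x == y then 1 else 0.

Lemma fle0 a : fle [ffun => 0%N] a.
Proof. by apply/fleP => i; rewrite ffunE. Qed.

Lemma fsub0 a : fsub a [ffun => 0%N] = a.
Proof. by apply/ffunP => i; rewrite !ffunE subn0. Qed.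

Lemma fsubv a : fsub a a = [ffun => 0%N].
Proof. by apply/ffunP => i; rewrite !ffunE subnn. Qed.

Lemma smul_deltal y g a U :
  smul (sdelta y) g (a, U) = if fle y.1 a && (y.2 \subset U)
     then sg y.2 (U :\: y.2) * g (fsub a y.1, U :\: y.2) else 0.
Proof.
rewrite (smulN _ _ _ (@leq_bigmax _ a)).
case: ifP => [/andP [hy hU]|hn].
  rewrite (@box_single K m _ a y.1 (fun v => \sum_(T : {set 'I_n} | T \subset U)
      sg T (U :\: T) * sdelta y (v, T) * g (fsub a v, U :\: T)) (@leq_bigmax _ a) hy).
    rewrite (bigD1 y.2) //= big1 ?addr0; first by rewrite /sdelta -surjective_pairing eqxx mulr1.
    move=> T /andP [_ hT]; rewrite /sdelta.
    case: eqP => [e|]; last by rewrite mulr0 mul0r.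
    by move: hT; rewrite -e eqxx.
  move=> u _ hu; rewrite big1 // => T _; rewrite /sdelta.
  case: eqP => [e|]; last by rewrite mulr0 mul0r.
  by move: hu; rewrite -e eqxx.
rewrite big1 // => b hb; rewrite big1 // => T hT; rewrite /sdelta.
case: eqP => [e|]; last by rewrite mulr0 mul0r.
by move: hn; rewrite -e /= hb hT.
Qed.

Lemma smul_deltar y f a U :
  smul f (sdelta y) (a, U) = if fle y.1 a && (y.2 \subset U)
     then sg (U :\: y.2) y.2 * f (fsub a y.1, U :\: y.2) else 0.
Proof.
rewrite smul_rev.
case: ifP => [/andP [hy hU]|hn].
  rewrite (@box_single K m _ a y.1 (fun v => \sum_(T : {set 'I_n} | T \subset U)
      sg (U :\: T) T * f (fsub a v, U :\: T) * sdelta y (v, T)) (@leq_bigmax _ a) hy).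
    rewrite (bigD1 y.2) //= big1 ?addr0; first by rewrite /sdelta -surjective_pairing eqxx mulr1.
    move=> T /andP [_ hT]; rewrite /sdelta.
    case: eqP => [e|]; last by rewrite mulr0.
    by move: hT; rewrite -e eqxx.
  move=> u _ hu; rewrite big1 // => T _; rewrite /sdelta.
  case: eqP => [e|]; last by rewrite mulr0.
  by move: hu; rewrite -e eqxx.
rewrite big1 // => b hb; rewrite big1 // => T hT; rewrite /sdelta.
case: eqP => [e|]; last by rewrite mulr0.
by move: hn; rewrite -e /= hb hT.
Qed.

Lemma sone_delta : @sone K m n = sdelta (mon0 m n).
Proof. by []. Qed.

Lemma smul1l g : smul (@sone K m n) g = g.
Proof.
apply: functional_extensionality => -[a U].
by rewrite sone_delta smul_deltal /= fle0 sub0set wsign0l fsub0 setD0 mul1r.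
Qed.

Lemma smul1r f : smul f (@sone K m n) = f.
Proof.
apply: functional_extensionality => -[a U].
by rewrite sone_delta smul_deltar /= fle0 sub0set wsign0r fsub0 setD0 mul1r.
Qed.


Lemma fle_fsub a (v : ffn) : fle (fsub a v) a.
Proof. by apply/fleP => i; rewrite ffunE leq_subr. Qed.

Lemma smulA f g k : smul (smul f g) k = smul f (smul g k).
Proof.
apply: functional_extensionality => -[a U].
set N := (\max_i a i)%N.
have hN : forall i, (a i <= N)%N := @leq_bigmax _ a.
have hb (v : ffn) : fle v a -> forall i, (v i <= N)%N.
  by move=> /fleP h i; apply: leq_trans (h i) (hN i).
rewrite (smulN _ _ _ hN) (smulN _ _ _ hN).
pose G := fun c' d' e' => \sum_(T : {set 'I_n} | T \subset U) \sum_(T' : {set 'I_n} | T' \subset T)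
       sg T (U :\: T) * sg T' (T :\: T') * f (c', T') * g (d', T :\: T') * k (e', U :\: T).
transitivity (\sum_(b : {ffun 'I_m -> 'I_N.+1} | fle (nu b) a)
  \sum_(c : {ffun 'I_m -> 'I_N.+1} | fle (nu c) (nu b))
   G (nu c) (fsub (nu b) (nu c)) (fsub a (nu b))).
  apply: eq_bigr => b hbb; rewrite /G /=.
  rewrite [RHS]exchange_big /=; apply: eq_bigr => T hT.
  rewrite (smulN _ _ _ (hb _ hbb)) mulr_sumr mulr_suml; apply: eq_bigr => c hc.
  rewrite mulr_sumr mulr_suml; apply: eq_bigr => T' hT'.
  by rewrite !mulrA.
rewrite (box_assoc G hN); apply: eq_bigr => c hc; rewrite /G /=.
transitivity (\sum_(d : {ffun 'I_m -> 'I_N.+1} | fle (nu d) (fsub a (nu c)))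
  \sum_(T' : {set 'I_n} | T' \subset U) \sum_(T'' : {set 'I_n} | T'' \subset U :\: T')
  sg T' (U :\: T') * f (nu c, T') * (sg T'' (U :\: T' :\: T'') * g (nu d, T'')
     * k (fsub (fsub a (nu c)) (nu d), U :\: T' :\: T''))); last first.
  rewrite exchange_big /=; apply: eq_bigr => T' hT'.
  rewrite (smulN _ _ _ (hb _ (fle_fsub a (nu c)))).
  rewrite mulr_sumr; apply: eq_bigr => d hd.
  by rewrite mulr_sumr.
apply: eq_bigr => d hd.
set e := fsub (fsub a (nu c)) (nu d).
pose H A B C := sg (A :|: B) C * sg A B * f (nu c, A) * g (nu d, B) * k (e, C).
transitivity (\sum_(T : {set 'I_n} | T \subset U) \sum_(T' : {set 'I_n} | T' \subset T)
    H T' (T :\: T') (U :\: T)).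
  apply: eq_bigr => T hT; apply: eq_bigr => T' hT'.
  by rewrite /H setUDK'.
rewrite (set_assoc U H); apply: eq_bigr => T' hT'; apply: eq_bigr => T'' hT''.
rewrite /H.
have := wsign_assoc K hT' hT''.
move=> hs.
transitivity ((sg (T' :|: T'') (U :\: T' :\: T'') * sg T' T'') *
  (f (nu c, T') * g (nu d, T'') * k (e, U :\: T' :\: T''))); first by ring.
rewrite hs; ring.
Qed.


Lemma card_split U T : T \subset U -> #|U| = (#|T| + #|U :\: T|)%N.
Proof. by move=> hT; rewrite -{1}(cardsID T U) (setIidPr hT). Qed.

Lemma smul_homog p q f g : homog p f -> homog q g -> homog (p (+) q) (smul f g).
Proof.
move=> hf hg [a U] /= hnz; apply/eqP; move: hnz; apply: contraNT => hne; apply/eqP.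
rewrite (smulN _ _ _ (@leq_bigmax _ a)) big1 // => b _; rewrite big1 // => T hT.
have [f0|fn] := eqVneq (f (nu b, T)) 0; first by rewrite f0 mulr0 mul0r.
have [g0|gn] := eqVneq (g (fsub a (nu b), U :\: T)) 0; first by rewrite g0 mulr0.
by move: (hf _ fn) (hg _ gn) hne => /= <- <-; rewrite (card_split hT) oddD eqxx.
Qed.

Lemma smulC p q f g : homog p f -> homog q g ->
  smul f g = sscale (ssign K (p && q)) (smul g f).
Proof.
move=> hf hg; apply: functional_extensionality => -[a U]; rewrite /sscale.
rewrite (smulN _ _ _ (@leq_bigmax _ a)) smul_rev mulr_sumr; apply: eq_bigr => b _.
rewrite mulr_sumr; apply: eq_bigr => T hT.
have [f0|fn] := eqVneq (f (nu b, T)) 0; first by rewrite f0; ring.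
have [g0|gn] := eqVneq (g (fsub a (nu b), U :\: T)) 0; first by rewrite g0; ring.
have hp := hf _ fn; have hq := hg _ gn; rewrite /= in hp hq.
have dT : [disjoint T & U :\: T].
  by rewrite disjoints_subset; apply/subsetP => x hx; rewrite !inE hx.
have hC := wsignC K dT.
have -> : sg T (U :\: T) = ssign K (p && q) * sg (U :\: T) T.
  rewrite -[LHS]mulr1 -(wsign_sqr K (U :\: T) T) mulrA hC /ssign -signr_odd oddM hp hq.
  by [].
ring.
Qed.

Lemma smul_mon0 f g : smul f g (mon0 m n) = f (mon0 m n) * g (mon0 m n).
Proof.
rewrite /mon0 (smulN f g set0 (N := 0%N)); last by move=> i; rewrite ffunE.
rewrite (@box_single K m 0%N [ffun => 0%N] [ffun => 0%N] (fun v => \sum_(T : {set 'I_n} | T \subset set0)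
   sg T (set0 :\: T) * f (v, T) * g (fsub [ffun => 0%N] v, set0 :\: T))).
- rewrite (bigD1 set0) //= big1 ?addr0.
    by rewrite wsign0l set0D fsubv mul1r.
  by move=> T /andP [hT hne]; move: hT; rewrite subset0 (negbTE hne).
- by move=> i; rewrite ffunE.
- exact: fle0.
- move=> u /fleP hu hne; exfalso; move/negP: hne; apply; apply/eqP/ffunP => i.
  by move: (hu i); rewrite !ffunE leqn0 => /eqP.
Qed.

End Ring.

Section Rec.
Variable (K : fieldType) (m n : nat).
Local Notation S := (ser K m n).
Local Notation ffn := {ffun 'I_m -> nat}.
Local Notation sg := (@wsign K n).
Implicit Types (f g : S) (a : ffn) (U T : {set 'I_n}).

Definition deg (x : mon m n) : nat := (\sum_i x.1 i + #|x.2|)%N.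

Definition iterS (Phi : S -> mon m n -> K) (k : nat) : S :=
  iter k (fun w x => Phi w x) (@szero K m n).

Lemma fix_ex (Phi : S -> mon m n -> K) :
  (forall f g x, (forall y, (deg y < deg x)%N -> f y = g y) -> Phi f x = Phi g x) ->
  exists w : S, forall x, w x = Phi w x.
Proof.
move=> hc.
have claim : forall k k' y, (k <= k')%N -> (deg y < k)%N -> iterS Phi k y = iterS Phi k' y.
  elim=> [//|k IH] [//|k'] y hk hy /=.
  apply: hc => z hz; apply: IH => //.
  by apply: leq_trans hz _; rewrite -ltnS.
exists (fun x => iterS Phi (deg x).+1 x) => x /=.
apply: hc => y hy; symmetry; exact: (claim (deg y).+1 (deg x) y hy (ltnSn _)).
Qed.

Lemma deg_lt (v : ffn) T a U : fle v a -> T \subset U -> (v, T) != (a, U) ->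
  (deg (v, T) < deg (a, U))%N.
Proof.
move=> /fleP hv hT hne; rewrite /deg /=.
have hs : (\sum_i v i <= \sum_i a i)%N by apply: leq_sum => i _; exact: hv.
have hc : (#|T| <= #|U|)%N by exact: subset_leq_card.
case: (eqVneq v a) => [e|hva].
  have hTU : T != U by move: hne; rewrite e xpair_eqE eqxx.
  have : (#|T| < #|U|)%N by apply: proper_card; rewrite properEneq hTU hT.
  by rewrite e ltn_add2l.
have [i hi] : exists i, (v i < a i)%N.
  apply/existsP; move: hva; apply: contraNT; rewrite negb_exists => /forallP h.
  apply/eqP/ffunP => i; apply/eqP; rewrite eqn_leq hv /=.
  by move: (h i); rewrite -leqNgt.
have : (\sum_i v i < \sum_i a i)%N.
  rewrite (bigD1 i) //= [X in (_ < X)%N](bigD1 i) //=.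
  have : (\sum_(j | j != i) v j <= \sum_(j | j != i) a j)%N by apply: leq_sum => j _; exact: hv.
  by move=> h; rewrite -addSn; apply: leq_add.
by move=> h; rewrite -addSn; apply: leq_add.
Qed.

Definition zero_at (x : mon m n) (v : S) : S := fun y => if y == x then 0 else v y.

Lemma zero_at_causal c f g x : (forall y, (deg y < deg x)%N -> f y = g y) ->
  smul c (zero_at x f) x = smul c (zero_at x g) x.
Proof.
case: x => a U hfg; apply: smul_ext => v T hv hT; split => //.
rewrite /zero_at; case: eqP => // /eqP hne; apply: hfg; exact: deg_lt.
Qed.

Definition zero2 (x : mon m n) (v : S) : S :=
  fun y => if (y == x) || (y == mon0 m n) then 0 else v y.

Lemma zero2_causal x f g : (forall y, (deg y < deg x)%N -> f y = g y) ->
  smul (zero2 x f) (zero2 x f) x = smul (zero2 x g) (zero2 x g) x.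
Proof.
case: x => a U hfg; apply: smul_ext => v T hv hT.
have e : zero2 (a, U) f (v, T) = zero2 (a, U) g (v, T).
  rewrite /zero2; case: eqP => [//|/eqP hne] /=; case: ifP => // _; apply: hfg; exact: deg_lt.
by [].
Qed.

Lemma smul_delta_self_r f (x : mon m n) : smul f (sdelta K x) x = f (mon0 m n).
Proof.
case: x => a U; rewrite smul_deltar /= (_ : fle a a) ?subxx /=; last by apply/fleP.
by rewrite setDv wsign0l fsubv mul1r.
Qed.

Lemma smul_delta_self_l g (x : mon m n) : smul (sdelta K x) g x = g (mon0 m n).
Proof.
case: x => a U; rewrite smul_deltal /= (_ : fle a a) ?subxx /=; last by apply/fleP.
by rewrite setDv wsign0r fsubv mul1r.
Qed.

Lemma smul_delta0_r f (x : mon m n) : smul f (sdelta K (mon0 m n)) x = f x.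
Proof. by rewrite -sone_delta smul1r. Qed.

Lemma smul_delta0_l g (x : mon m n) : smul (sdelta K (mon0 m n)) g x = g x.
Proof. by rewrite -sone_delta smul1l. Qed.

Lemma inv_ex c : c (mon0 m n) != 0 -> exists v, smul c v = @sone K m n.
Proof.
move=> hc0.
pose Phi (v : S) (x : mon m n) := if x == mon0 m n then (c (mon0 m n))^-1
   else - smul c (zero_at x v) x / c (mon0 m n).
have hcaus : forall f g x, (forall y, (deg y < deg x)%N -> f y = g y) -> Phi f x = Phi g x.
  move=> f g x hfg; rewrite /Phi; case: ifP => // _.
  by rewrite (zero_at_causal c hfg).
have [v hv] := fix_ex hcaus.
exists v; apply: functional_extensionality => x.
case: (eqVneq x (mon0 m n)) => [->|hx].
  by rewrite smul_mon0 hv /Phi eqxx /sone eqxx mulfV.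
have hdec : v = sadd (zero_at x v) (sscale (v x) (sdelta K x)).
  apply: functional_extensionality => y; rewrite /sadd /zero_at /sscale /sdelta.
  by case: eqP => [->|]; rewrite ?mulr1 ?mulr0 ?add0r ?addr0.
rewrite [in LHS]hdec smulDr smulZr smul_delta_self_r.
rewrite [v x]hv /Phi (negbTE hx) /sone (negbTE hx).
by rewrite !mulNr mulfVK // addrN.
Qed.


Lemma sqrt_ex (e : S) r0 : r0 * r0 = e (mon0 m n) -> r0 != 0 -> (2%:R != 0 :> K) ->
  exists w, smul w w = e.
Proof.
move=> hr hr0 h2.
pose Phi (w : S) (x : mon m n) := if x == mon0 m n then r0
   else (e x - smul (zero2 x w) (zero2 x w) x) / (2%:R * r0).
have hcaus : forall f g x, (forall y, (deg y < deg x)%N -> f y = g y) -> Phi f x = Phi g x.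
  move=> f g x hfg; rewrite /Phi; case: ifP => // _.
  by rewrite (zero2_causal hfg).
have [w hw] := fix_ex hcaus.
have hw0 : w (mon0 m n) = r0 by rewrite hw /Phi eqxx.
exists w; apply: functional_extensionality => x.
case: (eqVneq x (mon0 m n)) => [->|hx].
  by rewrite smul_mon0 hw0.
have hdec : w = sadd (zero2 x w) (sadd (sscale r0 (sdelta K (mon0 m n))) (sscale (w x) (sdelta K x))).
  apply: functional_extensionality => y; rewrite /sadd /zero2 /sscale /sdelta.
  case: (eqVneq y x) => [->|hyx] /=.
    by rewrite (negbTE hx) mulr0 mulr1 !add0r.
  case: (eqVneq y (mon0 m n)) => [->|hy0] /=.
    by rewrite hw0 mulr0 mulr1 !add0r addr0.
  by rewrite !mulr0 !addr0.
have -> : smul w w x = smul (sadd (zero2 x w) (sadd (sscale r0 (sdelta K (mon0 m n))) (sscale (w x) (sdelta K x))))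
    (sadd (zero2 x w) (sadd (sscale r0 (sdelta K (mon0 m n))) (sscale (w x) (sdelta K x)))) x.
  by rewrite -hdec.
rewrite !smulDl !smulDr !smulZl !smulZr.
rewrite !smul_delta0_r !smul_delta0_l !smul_delta_self_r !smul_delta_self_l.
have z1 : zero2 x w x = 0 by rewrite /zero2 eqxx.
have z2 : zero2 x w (mon0 m n) = 0 by rewrite /zero2 eqxx orbT.
have d1 : sdelta K (mon0 m n) x = 0 by rewrite /sdelta (negbTE hx).
have d2 : sdelta K x x = 1 by rewrite /sdelta eqxx.
have d3 : sdelta K x (mon0 m n) = 0 by rewrite /sdelta eq_sym (negbTE hx).
rewrite z1 z2 d1 d2 d3 [w x]hw /Phi (negbTE hx).
field.
by rewrite hr0 h2.
Qed.

End Rec.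

Section Pois.
Variable (K : fieldType) (m n : nat).
Local Notation S := (ser K m n).
Local Notation one := (@sone K m n).
Local Notation zero := (@szero K m n).
Implicit Types (f g k u v : S).

Lemma sfun_eq f g : (forall x, f x = g x) -> f = g.
Proof. exact: functional_extensionality. Qed.

Lemma sadd0r f : sadd f zero = f. Proof. by apply: sfun_eq => x; rewrite /sadd /szero addr0. Qed.
Lemma sadd0l f : sadd zero f = f. Proof. by apply: sfun_eq => x; rewrite /sadd /szero add0r. Qed.
Lemma saddC f g : sadd f g = sadd g f. Proof. by apply: sfun_eq => x; rewrite /sadd addrC. Qed.
Lemma saddA f g k : sadd f (sadd g k) = sadd (sadd f g) k.
Proof. by apply: sfun_eq => x; rewrite /sadd addrA. Qed.
Lemma sscale1 f : sscale 1 f = f. Proof. by apply: sfun_eq => x; rewrite /sscale mul1r. Qed.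
Lemma sscale0 f : sscale 0 f = zero. Proof. by apply: sfun_eq => x; rewrite /sscale mul0r. Qed.
Lemma sscaler0 c : sscale c zero = zero. Proof. by apply: sfun_eq => x; rewrite /sscale /szero mulr0. Qed.
Lemma soppE f : sopp f = sscale (-1) f. Proof. by apply: sfun_eq => x; rewrite /sscale /sopp mulN1r. Qed.

Lemma smul_addl f f' g : smul (sadd f f') g = sadd (smul f g) (smul f' g).
Proof. by apply: sfun_eq => x; rewrite smulDl. Qed.
Lemma smul_addr f g g' : smul f (sadd g g') = sadd (smul f g) (smul f g').
Proof. by apply: sfun_eq => x; rewrite smulDr. Qed.
Lemma smul_scalel c f g : smul (sscale c f) g = sscale c (smul f g).
Proof. by apply: sfun_eq => x; rewrite smulZl. Qed.
Lemma smul_scaler c f g : smul f (sscale c g) = sscale c (smul f g).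
Proof. by apply: sfun_eq => x; rewrite smulZr. Qed.
Lemma smul_0l g : smul zero g = zero.
Proof. by apply: sfun_eq => x; rewrite smul0l. Qed.
Lemma smul_0r f : smul f zero = zero.
Proof. by apply: sfun_eq => x; rewrite smul0r. Qed.

Definition sev f : S := fun x => if odd #|x.2| then 0 else f x.
Definition sod f : S := fun x => if odd #|x.2| then f x else 0.

Lemma sev_sod f : sadd (sev f) (sod f) = f.
Proof. by apply: sfun_eq => x; rewrite /sadd /sev /sod; case: ifP; rewrite ?add0r ?addr0. Qed.

Lemma homog_sev f : homog false (sev f).
Proof. by move=> x; rewrite /sev; case: ifP => //; rewrite eqxx. Qed.

Lemma homog_sod f : homog true (sod f).
Proof. by move=> x; rewrite /sod; case: ifP => //; rewrite eqxx. Qed.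

Lemma homogE p f (x : mon m n) : homog p f -> odd #|x.2| != p -> f x = 0.
Proof. by move=> h hx; apply/eqP; apply: contraNT hx => /h ->. Qed.

Lemma sev_split u v : homog false u -> homog true v -> sev (sadd u v) = u.
Proof.
move=> hu hv; apply: sfun_eq => x; rewrite /sev /sadd.
case: (boolP (odd #|x.2|)) => hx.
  by rewrite (homogE hu) ?hx.
by rewrite (homogE hv) ?addr0 // (negbTE hx).
Qed.

Lemma sod_split u v : homog false u -> homog true v -> sod (sadd u v) = v.
Proof.
move=> hu hv; apply: sfun_eq => x; rewrite /sod /sadd.
case: (boolP (odd #|x.2|)) => hx.
  by rewrite (homogE hu) ?add0r ?hx.
by rewrite (homogE hv) // (negbTE hx).
Qed.

Lemma homog_add p f g : homog p f -> homog p g -> homog p (sadd f g).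
Proof.
move=> hf hg x; rewrite /sadd => hx; apply/eqP; apply: contraNT hx => hx.
by rewrite (homogE hf hx) (homogE hg hx) addr0.
Qed.

Lemma homog_scale p c f : homog p f -> homog p (sscale c f).
Proof.
move=> hf x; rewrite /sscale => hx; apply/eqP; apply: contraNT hx => hx.
by rewrite (homogE hf hx) mulr0.
Qed.

Lemma homog_zero p : homog p zero.
Proof. by move=> x; rewrite /szero eqxx. Qed.

Lemma homog_one : homog false one.
Proof.
move=> x; rewrite /sone; case: (eqVneq x (mon0 m n)) => [-> _|_]; last by rewrite eqxx.
by rewrite /= cards0.
Qed.

Lemma sev_homog f : homog false f -> sev f = f.
Proof. by move=> hf; rewrite -[f in sev f]sadd0r sev_split //; exact: homog_zero. Qed.

Lemma sod_homog f : homog true f -> sod f = f.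
Proof. by move=> hf; rewrite -[f in sod f]sadd0l sod_split //; exact: homog_zero. Qed.

Lemma split_zero u v : homog false u -> homog true v -> sadd u v = zero ->
  u = zero /\ v = zero.
Proof.
move=> hu hv e; split.
  by rewrite -(sev_split hu hv) e -[zero in sev zero](sadd0r zero) (sev_split (homog_zero false) (homog_zero true)).
by rewrite -(sod_split hu hv) e -[zero in sod zero](sadd0r zero) (sod_split (homog_zero false) (homog_zero true)).
Qed.

Lemma spar_ev f : spar f = sadd (sev f) (sopp (sod f)).
Proof.
by apply: sfun_eq => x; rewrite /spar /sadd /sopp /sev /sod; case: ifP; rewrite ?oppr0 ?add0r ?addr0.
Qed.

Lemma spar_homog p f : homog p f -> spar f = sscale (ssign K p) f.
Proof.
move=> hf; apply: sfun_eq => x; rewrite /spar /sscale /ssign.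
case: (eqVneq (odd #|x.2|) p) => [<-|hx].
  by case: ifP => _; rewrite ?expr1 ?expr0 ?mulN1r ?mul1r.
by rewrite (homogE hf hx) mulr0; case: ifP; rewrite ?oppr0.
Qed.

Lemma two_zero (x : K) : (2%:R != 0 :> K) -> x = - x -> x = 0.
Proof.
move=> h2 e; have : x * 2%:R == 0 by rewrite mulr_natr mulr2n {2}e addrN.
by rewrite mulf_eq0 (negbTE h2) orbF => /eqP.
Qed.

Lemma smul_odd_sq h : (2%:R != 0 :> K) -> homog true h -> smul h h = zero.
Proof.
move=> h2 hh; apply: sfun_eq => x; rewrite /szero; apply: two_zero => //.
by rewrite {1}(smulC hh hh) /sscale /ssign /= expr1 mulN1r.
Qed.

End Pois.

Section Br.
Variable (K : fieldType) (m n : nat).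
Local Notation S := (ser K m n).
Local Notation one := (@sone K m n).
Local Notation zero := (@szero K m n).
Implicit Types (f g k u v : S).
Variable br : S -> S -> S.
Hypothesis Hbr : is_poisson br.
Hypothesis h2 : (2%:R != 0 :> K).

Lemma self_add (x : K) : x = x + x -> x = 0.
Proof. by move=> e; apply: (@addrI _ x); rewrite addr0 -e. Qed.

Lemma br0l g : br zero g = zero.
Proof. by have := br_scalel Hbr 0 zero g; rewrite !sscale0. Qed.

Lemma br0r f : br f zero = zero.
Proof. by have := br_scaler Hbr 0 f zero; rewrite !sscale0. Qed.

Lemma sscaleA c d f : sscale c (sscale d f) = sscale (c * d) f.
Proof. by apply: sfun_eq => x; rewrite /sscale mulrA. Qed.

Lemma br1r_h p f : homog p f -> br f one = zero.
Proof.
move=> hf; have := br_leibniz Hbr one hf (@homog_one K m n).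
rewrite !smul1l smul1r andbF /ssign expr0 sscale1 => e.
by apply: sfun_eq => x; apply: self_add; rewrite {1}e.
Qed.

Lemma br1r f : br f one = zero.
Proof.
rewrite -(sev_sod f) (br_addl Hbr) (br1r_h (homog_sev (f:=f))) (br1r_h (homog_sod (f:=f))).
exact: sadd0r.
Qed.

Lemma br1l g : br one g = zero.
Proof.
rewrite -(sev_sod g) (br_addr Hbr).
rewrite (br_skew Hbr (@homog_one K m n) (homog_sev (f:=g))) br1r sscaler0.
by rewrite (br_skew Hbr (@homog_one K m n) (homog_sod (f:=g))) br1r sscaler0 sadd0r.
Qed.

Lemma spar_add f g : spar (sadd f g) = sadd (spar f) (spar g).
Proof. by apply: sfun_eq => x; rewrite /spar /sadd; case: ifP => _ //; rewrite opprD. Qed.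

Lemma spar_scale c f : spar (sscale c f) = sscale c (spar f).
Proof. by apply: sfun_eq => x; rewrite /spar /sscale; case: ifP => _ //; rewrite mulrN. Qed.

Lemma smul_sscale_r c f g : smul f (sscale c g) = sscale c (smul f g).
Proof. exact: smul_scaler. Qed.

Section H.
Variable h : S.
Hypothesis hh : homog true h.

Lemma B1_parts f : inB1 br h f -> inB1 br h (sev f) /\ inB1 br h (sod f).
Proof.
rewrite /inB1 => hf.
have e : sadd (br h (sod f)) (br h (sev f)) = zero by rewrite saddC -(br_addr Hbr) sev_sod.
have [h1 h3] := split_zero (br_even Hbr hh (homog_sod (f:=f))) (br_even Hbr hh (homog_sev (f:=f))) e.
by [].
Qed.

Lemma L1h p f g : homog p f -> inB1 br h f -> br f (smul h g) = smul h (br (spar f) g).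
Proof.
move=> hf hB; rewrite (br_leibniz Hbr _ hf hh) (br_skew Hbr hf hh) hB sscaler0 smul_0l sadd0l.
by rewrite (spar_homog hf) (br_scalel Hbr) smul_scaler andbT.
Qed.

Lemma L1 f g : inB1 br h f -> br f (smul h g) = smul h (br (spar f) g).
Proof.
move=> hB; have [h0 h1] := B1_parts hB.
rewrite -(sev_sod f) (br_addl Hbr) (L1h _ (homog_sev (f:=f)) h0) (L1h _ (homog_sod (f:=f)) h1).
by rewrite -smul_addr spar_add (br_addl Hbr).
Qed.

Lemma L2h p q f g : homog p f -> homog q g -> inB1 br h g ->
  br (smul h f) g = smul h (br f g).
Proof.
move=> hf hg hB.
have hX := smul_homog hh hf.
rewrite (br_skew Hbr hX hg) (br_leibniz Hbr _ hg hh) (br_skew Hbr hg hh) hB sscaler0 smul_0l sadd0l.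
rewrite (br_skew Hbr hg hf) smul_scaler !sscaleA.
rewrite -[RHS]sscale1; congr sscale.
by case: p {hf hX}; case: q {hg hB}; rewrite /ssign /= ?expr1 ?expr0; ring.
Qed.

Lemma L2g q f g : homog q g -> inB1 br h g -> br (smul h f) g = smul h (br f g).
Proof.
move=> hg hB.
rewrite -[f in smul h f](sev_sod f) smul_addr (br_addl Hbr).
rewrite (L2h (homog_sev (f:=f)) hg hB) (L2h (homog_sod (f:=f)) hg hB).
by rewrite -smul_addr -(br_addl Hbr) sev_sod.
Qed.

Lemma L2 f g : inB1 br h g -> br (smul h f) g = smul h (br f g).
Proof.
move=> hB; have [h0 h1] := B1_parts hB.
rewrite -[g in br _ g](sev_sod g) (br_addr Hbr).
rewrite (L2g _ (homog_sev (f:=g)) h0) (L2g _ (homog_sod (f:=g)) h1).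
by rewrite -smul_addr -(br_addr Hbr) sev_sod.
Qed.

Hypothesis hhh : br h h = one.

Lemma L0 g : inB1 br h g -> br h (smul h g) = g.
Proof.
move=> hg; rewrite (br_leibniz Hbr _ hh hh) hhh smul1l hg smul_0r sscaler0.
exact: sadd0r.
Qed.

Lemma L3h p f g : homog p f -> inB1 br h f -> inB1 br h g ->
  br (smul h f) (smul h g) = smul (spar f) g.
Proof.
move=> hf hBf hBg.
have hX := smul_homog hh hf.
rewrite (br_leibniz Hbr _ hX hh) (br_skew Hbr hX hh) (L0 hBf) (L2 _ hBg).
rewrite -smulA (smul_odd_sq h2 hh) smul_0l sscaler0 sadd0r (spar_homog hf) smul_scalel.
rewrite smul_scalel; congr sscale.
by case: p {hf hX}; rewrite /ssign /= ?expr1 ?expr0 ?opprK.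
Qed.

Lemma L3 f g : inB1 br h f -> inB1 br h g ->
  br (smul h f) (smul h g) = smul (spar f) g.
Proof.
move=> hBf hBg; have [h0 h1] := B1_parts hBf.
rewrite -{1}(sev_sod f) smul_addr (br_addl Hbr) (L3h (homog_sev (f:=f)) h0 hBg) (L3h (homog_sod (f:=f)) h1 hBg).
by rewrite -smul_addl -spar_add sev_sod.
Qed.

End H.

Lemma comm_h h f : homog true h -> smul f h = smul h (spar f).
Proof.
move=> hh; rewrite -{1}(sev_sod f) smul_addl (smulC (homog_sev (f:=f)) hh) (smulC (homog_sod (f:=f)) hh).
rewrite spar_ev smul_addr soppE smul_scaler /ssign /= expr0 expr1 sscale1 -soppE.
by [].
Qed.

End Br.

Section Main2.
Variable (K : fieldType) (m n : nat).
Local Notation S := (ser K m n).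
Local Notation one := (@sone K m n).
Local Notation zero := (@szero K m n).
Variable br : S -> S -> S.
Hypothesis Hbr : is_poisson br.
Hypothesis h2 : (2%:R != 0 :> K).

Lemma part2 h : homog true h -> br h h = one -> phi_poisson_iso br h.
Proof.
move=> hh hhh; rewrite /phi_poisson_iso /=; split.
- move=> [P1 P2] [Q1 Q2] /= hP1 hP2 hQ1 hQ2 e.
  have e2 : P2 = Q2.
    have := congr1 (br h) e; rewrite /phi /= !(br_addr Hbr) hP1 hQ1 !sadd0l.
    by rewrite (L0 Hbr hh hhh hP2) (L0 Hbr hh hhh hQ2).
  congr pair => //; apply: sfun_eq => x.
  have := congr1 (fun F => F x) e; rewrite /phi /sadd /= e2.
  exact: addIr.
- move=> f.
  have hB : inB1 br h (br h f).
    rewrite /inB1; apply: sfun_eq => x; rewrite /szero /=; apply: (two_zero h2).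
    have := br_jacobi Hbr f hh hh; rewrite hhh (br1l Hbr) sadd0l => e.
    by rewrite {1}e /sscale /ssign /= expr1 mulN1r.
  exists (sadd f (sopp (smul h (br h f))), br h f); split => //=.
    rewrite /inB1 (br_addr Hbr) soppE (br_scaler Hbr) (L0 Hbr hh hhh hB).
    by apply: sfun_eq => x; rewrite /sadd /sscale /szero mulN1r addrN.
  by apply: sfun_eq => x; rewrite /phi /sadd /sopp /=; rewrite addrNK.
- move=> c P Q _ _ _ _; rewrite /phi /= smul_addr smul_scaler.
  by apply: sfun_eq => x; rewrite /sadd /sscale; ring.
- split.
    by rewrite /phi /= smul_0r sadd0r.
  move=> [P1 P2] [Q1 Q2] /= hP1 hP2 hQ1 hQ2.
  rewrite /phi /tmul /= !smul_addl !smul_addr.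
  rewrite -[smul P1 (smul h Q2)]smulA (comm_h _ hh) smulA.
  rewrite !smulA -[smul P2 (smul h Q2)]smulA (comm_h P2 hh) smulA -[smul h (smul h _)]smulA (smul_odd_sq h2 hh) smul_0l.
  apply: sfun_eq => x; rewrite /sadd /szero; ring.
- move=> [P1 P2] [Q1 Q2] /= hP1 hP2 hQ1 hQ2.
  rewrite /phi /tbr /= !(br_addl Hbr) !(br_addr Hbr).
  rewrite (L1 Hbr hh _ hP1) (L2 Hbr hh _ hQ1) (L3 Hbr h2 hh hhh hP2 hQ2).
  apply: sfun_eq => x; rewrite /sadd smulDr; ring.
Qed.

End Main2.

Section Main1.
Variable (K : fieldType) (m n : nat).
Local Notation S := (ser K m n).
Local Notation one := (@sone K m n).
Local Notation zero := (@szero K m n).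
Variable br : S -> S -> S.
Hypothesis Hbr : is_poisson br.
Hypothesis h2 : (2%:R != 0 :> K).
Hypothesis h3 : (3%:R != 0 :> K).
Hypothesis hsq : forall x : K, exists r, r * r = x.

Lemma deriv_even h g k : homog true h -> homog false g ->
  br h (smul g k) = sadd (smul (br h g) k) (smul g (br h k)).
Proof.
by move=> hh hg; rewrite (br_leibniz Hbr _ hh hg) /ssign /= expr0 sscale1.
Qed.

Lemma sadd_self_zero (Y : S) : sadd Y Y = zero -> Y = zero.
Proof.
move=> e; apply: sfun_eq => x; rewrite /szero; apply: (two_zero h2).
have := congr1 (fun F => F x) e; rewrite /sadd /szero => /eqP.
by rewrite addr_eq0 => /eqP.
Qed.

Lemma normalize h : homog true h -> br h h (mon0 m n) != 0 ->
  exists H, homog true H /\ br H H = one.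
Proof.
move=> hh hc0.
set c := br h h.
have hc : homog false c := br_even Hbr hh hh.
have Dc : br h c = zero.
  have e := br_jacobi Hbr h hh hh.
  rewrite -/c (br_skew Hbr hc hh) in e.
  apply: sfun_eq => x; have := congr1 (fun F => F x) e.
  rewrite /sadd /sscale /ssign /szero /= expr0 expr1 !mulN1r.
  set y := br h c x => e'.
  have e3 : y * 3%:R = y - (- y + - y) by ring.
  move: e3; rewrite -e' subrr => /eqP; rewrite mulf_eq0 (negbTE h3) orbF.
  by move/eqP.
have [v hv] := inv_ex hc0.
set e := sev v.
have he : homog false e := homog_sev (f:=v).
have hce : smul c e = one.
  have hs1 := smul_homog hc (homog_sev (f:=v)).
  have hs2 := smul_homog hc (homog_sod (f:=v)).
  rewrite -(sev_split hs1 hs2) -smul_addr sev_sod hv.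
  exact: sev_homog (@homog_one K m n).
have he0 : e (mon0 m n) != 0.
  apply/eqP => e0; have := congr1 (fun F => F (mon0 m n)) hce.
  rewrite smul_mon0 e0 mulr0 /sone eqxx => /eqP; by rewrite eq_sym oner_eq0.
have [r hr] := hsq (e (mon0 m n)).
have hr0 : r != 0 by apply: contraNneq he0 => r0; rewrite -hr r0 mulr0.
have [w' hw'] := sqrt_ex hr hr0 h2.
set w := sev w'.
have hw : homog false w := homog_sev (f:=w').
have hww : smul w w = e.
  have hw1 : homog true (sod w') := homog_sod (f:=w').
  have hw11 := smul_odd_sq h2 hw1.
  have e1 : smul w' w' = sadd (sadd (smul w w) (smul w (sod w'))) (sadd (smul (sod w') w) zero).
    by rewrite -{1 2}(sev_sod w') -/w smul_addl !smul_addr hw11.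
  apply: sfun_eq => x.
  have := congr1 (fun F => F x) e1; rewrite hw' /sadd /szero addr0.
  have o1 := smul_homog hw hw1; have o2 := smul_homog hw1 hw; have o3 := smul_homog hw hw.
  case: (boolP (odd #|x.2|)) => hx.
    by rewrite (homogE o3) ?hx // (homogE he) ?hx.
  rewrite (homogE o1) ?(negbTE hx) // (homogE o2) ?(negbTE hx) //.
  by rewrite addr0 addr0 => ->.
have De : br h e = zero.
  have e1 : br h (smul c e) = zero by rewrite hce br1r.
  rewrite (deriv_even _ hh hc) Dc smul_0l sadd0l in e1.
  have hec : smul e c = smul c e by rewrite (smulC he hc) /ssign /= expr0 sscale1.
  by rewrite -[br h e]smul1l -hce -hec smulA e1 smul_0r.
have Dw : br h w = zero.
  have e1 : br h (smul w w) = zero by rewrite hww De.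
  have hD : homog true (br h w) := br_even Hbr hh hw.
  rewrite (deriv_even _ hh hw) (smulC hD hw) /ssign /= expr0 sscale1 in e1.
  have e2 := sadd_self_zero e1.
  by rewrite -[br h w]smul1l -hce -hww -smulA smulA e2 smul_0r.
exists (smul h w); split; first exact: (smul_homog hh hw).
have hH : homog true (smul h w) := smul_homog hh hw.
rewrite (br_leibniz Hbr _ hH hh) (br_skew Hbr hH hh).
rewrite (br_leibniz Hbr _ hh hh) Dw smul_0r sscaler0 sadd0r -/c.
rewrite (br_skew Hbr hH hw) (br_leibniz Hbr _ hw hh) (br_skew Hbr hw hh) Dw sscaler0 smul_0l sadd0l.
rewrite !smul_scaler -smulA (smul_odd_sq h2 hh) smul_0l !sscaler0 sadd0r.
by rewrite /ssign /= expr1 opprK sscale1 smulA hww hce.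
Qed.


Lemma yvar0 i : yvar K (n:=n) i (mon0 m n) = 0.
Proof.
rewrite /yvar; case: eqP => // e.
by have := congr1 (fun x : mon m n => x.1 i) e; rewrite /= !ffunE eqxx.
Qed.

Lemma thvar0 j : thvar K (m:=m) j (mon0 m n) = 0.
Proof.
rewrite /thvar; case: eqP => // e.
by have := congr1 (fun x : mon m n => j \in x.2) e; rewrite /= inE set11.
Qed.

Lemma part1 chi f g t : homog true f -> homog true g -> in_AM chi t ->
  br f g = sadd one t -> exists h, homog true h /\ br h h = one.
Proof.
move=> hf hg [a [b et]] hfg.
have s1 i : smul (a i) (sadd (xel chi i) (sconst (- chi i))) (mon0 m n) = 0.
  rewrite smul_mon0 /sadd /xel /sadd /sconst /sscale /sone eqxx yvar0; ring.
have s2 j : smul (b j) (thvar K j) (mon0 m n) = 0 by rewrite smul_mon0 thvar0 mulr0.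
have t0 : t (mon0 m n) = 0.
  rewrite et /= (eq_bigr (fun _ => 0) (fun i _ => s1 i)) (eq_bigr (fun _ => 0) (fun j _ => s2 j)).
  by rewrite !big1_eq addr0.
have fg0 : br f g (mon0 m n) = 1 by rewrite hfg /sadd t0 /sone eqxx addr0.
case: (eqVneq (br f f (mon0 m n)) 0) => hff; last exact: normalize hf hff.
case: (eqVneq (br g g (mon0 m n)) 0) => hgg; last exact: normalize hg hgg.
apply: (normalize (homog_add hf hg)).
rewrite (br_addl Hbr) !(br_addr Hbr) (br_skew Hbr hg hf) /sadd /sscale /ssign /= expr1 opprK mul1r.
by rewrite hff hgg fg0 add0r addr0.
Qed.

End Main1.

Unset Implicit Arguments.

Theorem lemma2p2 (R : realType) (m n : nat) (chi : 'I_m -> R[i])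
    (br : ser R[i] m n -> ser R[i] m n -> ser R[i] m n)
    (Hbr : is_poisson br) (Hcont : br_continuous br) :
  (forall f g t : ser R[i] m n,
      is_odd f -> is_odd g -> in_AM chi f -> in_AM chi g -> in_AM chi t ->
      br f g = sadd (@sone _ m n) t ->
      exists h : ser R[i] m n, is_odd h /\ br h h = @sone _ m n)
  /\
  (forall h : ser R[i] m n, is_odd h -> br h h = @sone _ m n ->
      phi_poisson_iso br h).
Proof.
have h2 : (2%:R != 0 :> R[i]) by rewrite Num.Theory.pnatr_eq0.
have h3 : (3%:R != 0 :> R[i]) by rewrite Num.Theory.pnatr_eq0.
have hsq : forall x : R[i], exists r, r * r = x.
  by move=> x; exists (sqrtc x); rewrite -expr2 sqr_sqrtc.
split.
- move=> f g t hf hg _ _ ht e.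
  exact: (part1 Hbr h2 h3 hsq hf hg ht e).
- move=> h hh hhh; exact: (part2 Hbr h2 hh hhh).
Qed.
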